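(* Let $X$ be a geodesic metric space and $f:X\to\mathbb R$. Then $f$ is glacially oscillating if and only if for each $\epsilon>0$ there is a bounded subset $K$ of $X$ such that for every connected component $C$ of $X\setminus K$ the diameter of $f(C)$ is at most $\epsilon$.
   Context: A glacial scale on a metric space $X$ is a sequence $\mathcal S=\{(K_i,n_i)\}_{i\ge1}$ of pairs, each $K_i$ a bounded subset of $X$ and $n_i$ a natural number, such that for every bounded $K\subset X$ and every $r>0$ there is $i$ with $K\subset K_i$ and $n_i>r$. An $\mathcal S$-chain is a finite sequence $x_1,\dots,x_n$ in $X$ such that for each $i\le n-1$ there is $m\ge1$ with $x_i,x_{i+1}\notin K_m$ and $d(x_i,x_{i+1})\le n_m$. A function $f:X\to\mathbb R$ is glacially oscillating if for every $\epsilon>0$ there is a glacial scale $\mathcal S$ such that $|f(x_1)-f(x_n)|<\epsilon$ for every $\mathcal S$-chain $x_1,\dots,x_n$. *)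

(* Defs.v *)
From Stdlib Require Import Reals.
Open Scope R_scope.

Definition is_metric {X : Type} (d : X -> X -> R) : Prop :=
  (forall x y, 0 <= d x y) /\
  (forall x y, d x y = 0 <-> x = y) /\
  (forall x y, d x y = d y x) /\
  (forall x y z, d x z <= d x y + d y z).

Definition geodesic {X : Type} (d : X -> X -> R) : Prop :=
  forall x y : X, exists g : R -> X,
    g 0 = x /\ g (d x y) = y /\
    (forall s t, 0 <= s <= d x y -> 0 <= t <= d x y ->
       d (g s) (g t) = Rabs (s - t)).

Definition mbounded {X : Type} (d : X -> X -> R) (K : X -> Prop) : Prop :=
  exists (x0 : X) (r : R), forall x, K x -> d x0 x <= r.

Definition mopen {X : Type} (d : X -> X -> R) (U : X -> Prop) : Prop :=
  forall x, U x -> exists r, 0 < r /\ forall y, d x y < r -> U y.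

Definition mconnected {X : Type} (d : X -> X -> R) (A : X -> Prop) : Prop :=
  ~ exists U V : X -> Prop,
      mopen d U /\ mopen d V /\
      (forall x, A x -> U x \/ V x) /\
      (exists x, A x /\ U x) /\ (exists x, A x /\ V x) /\
      (forall x, A x -> U x -> V x -> False).

Definition component {X : Type} (d : X -> X -> R) (A : X -> Prop) (x : X)
  : X -> Prop :=
  fun y => exists B : X -> Prop,
    mconnected d B /\ (forall z, B z -> A z) /\ B x /\ B y.

Definition is_component {X : Type} (d : X -> X -> R) (A C : X -> Prop) : Prop :=
  exists x, A x /\ forall y, C y <-> component d A x y.

Definition diam_image_le {X : Type} (f : X -> R) (C : X -> Prop) (eps : R)
  : Prop :=
  forall a b, C a -> C b -> Rabs (f a - f b) <= eps.

Definition glacial_scale {X : Type} (d : X -> X -> R)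
  (K : nat -> X -> Prop) (n : nat -> nat) : Prop :=
  (forall i, mbounded d (K i)) /\
  (forall (B : X -> Prop) (r : R), mbounded d B -> 0 < r ->
     exists i, (forall x, B x -> K i x) /\ r < INR (n i)).

Definition S_chain {X : Type} (d : X -> X -> R)
  (K : nat -> X -> Prop) (n : nat -> nat) (x : nat -> X) (N : nat) : Prop :=
  forall i, (i < N)%nat -> exists m,
    ~ K m (x i) /\ ~ K m (x (S i)) /\ d (x i) (x (S i)) <= INR (n m).

Definition glacially_oscillating {X : Type} (d : X -> X -> R) (f : X -> R)
  : Prop :=
  forall eps, 0 < eps -> exists (K : nat -> X -> Prop) (n : nat -> nat),
    glacial_scale d K n /\
    forall (x : nat -> X) (N : nat), S_chain d K n x N ->
      Rabs (f (x 0%nat) - f (x N)) < eps.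

(* Main.v *)
Require Import Defs.
From Stdlib Require Import Reals.
From Stdlib Require Import Lra Lia ZArith Classical ClassicalEpsilon.
Open Scope R_scope.

Section Aux.
Context {X : Type} (d : X -> X -> R) (Hd : is_metric d).

Lemma dxx x : d x x = 0.
Proof. destruct Hd as [_ [H _]]. apply H; reflexivity. Qed.
Lemma dsym x y : d x y = d y x.
Proof. destruct Hd as [_ [_ [H _]]]. apply H. Qed.
Lemma dtri x y z : d x z <= d x y + d y z.
Proof. destruct Hd as [_ [_ [_ H]]]. apply H. Qed.
Lemma dpos x y : 0 <= d x y.
Proof. destruct Hd as [H _]. apply H. Qed.

Lemma conn_single c : mconnected d (fun x => x = c).
Proof.
  intros [U [V [_ [_ [_ [[a [Ha Ua]] [[b [Hb Vb]] Hdis]]]]]]].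
  subst. apply (Hdis c eq_refl Ua Vb).
Qed.

Lemma conn_union B1 B2 c : mconnected d B1 -> mconnected d B2 -> B1 c -> B2 c ->
  mconnected d (fun x => B1 x \/ B2 x).
Proof.
  intros H1 H2 c1 c2 [U [V [oU [oV [cov [[a [Ha Ua]] [[b [Hb Vb]] Hdis]]]]]]].
  destruct (cov c (or_introl c1)) as [Uc | Vc].
  - destruct Hb as [Hb | Hb].
    + apply H1. exists U, V. refine (conj oU (conj oV (conj _ (conj _ (conj _ _))))).
      * intros; apply cov; auto.
      * exists c; auto.
      * exists b; auto.
      * intros x Hx; apply Hdis; auto.
    + apply H2. exists U, V. refine (conj oU (conj oV (conj _ (conj _ (conj _ _))))).
      * intros; apply cov; auto.
      * exists c; auto.
      * exists b; auto.
      * intros x Hx; apply Hdis; auto.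
  - destruct Ha as [Ha | Ha].
    + apply H1. exists U, V. refine (conj oU (conj oV (conj _ (conj _ (conj _ _))))).
      * intros; apply cov; auto.
      * exists a; auto.
      * exists c; auto.
      * intros x Hx; apply Hdis; auto.
    + apply H2. exists U, V. refine (conj oU (conj oV (conj _ (conj _ (conj _ _))))).
      * intros; apply cov; auto.
      * exists a; auto.
      * exists c; auto.
      * intros x Hx; apply Hdis; auto.
Qed.

Definition clamp (L t : R) := Rmin L (Rmax 0 t).

Lemma clamp_in L t : 0 <= L -> 0 <= clamp L t <= L.
Proof. intros; unfold clamp, Rmin, Rmax; repeat destruct Rle_dec; lra. Qed.
Lemma clamp_id L t : 0 <= t <= L -> clamp L t = t.
Proof. intros; unfold clamp, Rmin, Rmax; repeat destruct Rle_dec; lra. Qed.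
Lemma clamp_lip L a b : 0 <= L -> Rabs (clamp L a - clamp L b) <= Rabs (a - b).
Proof.
  intros; unfold clamp, Rmin, Rmax, Rabs; repeat destruct Rle_dec;
  repeat destruct Rcase_abs; lra.
Qed.

Lemma seg_conn (g : R -> X) (L : R) : 0 <= L ->
  (forall s t, 0 <= s <= L -> 0 <= t <= L -> d (g s) (g t) = Rabs (s - t)) ->
  mconnected d (fun y => exists t, 0 <= t <= L /\ g t = y).
Proof.
  intros HL Hg [U [V [oU [oV [cov [[y1 [[a [Ha Ea]] Ua]] [[y2 [[b [Hb Eb]] Vb]] Hdis]]]]]]].
  subst.
  set (h := fun t => if excluded_middle_informative (U (g (clamp L t))) then 1 else -1).
  assert (Ain : forall t, exists s, 0 <= s <= L /\ g s = g (clamp L t)).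
  { intro t; exists (clamp L t); split; auto using clamp_in. }
  assert (cont : continuity h).
  { intros x eps Heps.
    destruct (cov _ (Ain x)) as [Ux | Vx].
    - destruct (oU _ Ux) as [r [Hr Hball]].
      exists r; split; auto. intros x' [_ Hx']. simpl in Hx'. unfold R_dist in Hx'.
      simpl. unfold R_dist, h.
      assert (U (g (clamp L x'))).
      { apply Hball. rewrite Hg by auto using clamp_in.
        eapply Rle_lt_trans; [apply clamp_lip; auto|].
        rewrite Rabs_minus_sym; auto. }
      repeat destruct excluded_middle_informative; try contradiction.
      rewrite Rminus_diag, Rabs_R0; auto.
    - destruct (oV _ Vx) as [r [Hr Hball]].
      exists r; split; auto. intros x' [_ Hx']. simpl in Hx'. unfold R_dist in Hx'.
      simpl. unfold R_dist, h.
      assert (V (g (clamp L x'))).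
      { apply Hball. rewrite Hg by auto using clamp_in.
        eapply Rle_lt_trans; [apply clamp_lip; auto|].
        rewrite Rabs_minus_sym; auto. }
      destruct (excluded_middle_informative (U (g (clamp L x')))) as [u1|u1];
      destruct (excluded_middle_informative (U (g (clamp L x)))) as [u2|u2].
      * rewrite Rminus_diag, Rabs_R0; auto.
      * exfalso. exact (Hdis _ (Ain x') u1 H).
      * exfalso. exact (Hdis _ (Ain x) u2 Vx).
      * rewrite Rminus_diag, Rabs_R0; auto. }
  assert (ha : h a = 1).
  { unfold h; rewrite clamp_id by auto. destruct excluded_middle_informative; tauto. }
  assert (hb : h b = -1).
  { unfold h; rewrite clamp_id by auto. destruct excluded_middle_informative; auto.
    exfalso; eapply Hdis; [exists b; split; eauto| eauto | eauto]. }
  assert (Hz : exists z, h z = 0).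
  { destruct (Rle_dec a b).
    - destruct (IVT_cor h a b cont r) as [z [_ Hz]]. rewrite ha, hb; lra. eauto.
    - destruct (IVT_cor h b a cont) as [z [_ Hz]]. lra. rewrite ha, hb; lra. eauto. }
  destruct Hz as [z Hz]. unfold h in Hz. destruct excluded_middle_informative; lra.
Qed.

Definition reach (B : X -> Prop) (p z : X) : Prop :=
  exists (x : nat -> X) (N : nat), x 0%nat = p /\ x N = z /\
    (forall i, (i <= N)%nat -> B (x i)) /\
    (forall i, (i < N)%nat -> d (x i) (x (S i)) < 1).

Lemma reach_ext B p z y : reach B p z -> B y -> d z y < 1 -> reach B p y.
Proof.
  intros [x [N [H0 [HN [HB Hs]]]]] By Hzy.
  exists (fun i => if (i <=? N)%nat then x i else y), (S N).
  repeat split.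
  - simpl. auto.
  - assert ((S N <=? N)%nat = false) as E by (apply Nat.leb_gt; lia). rewrite E; auto.
  - intros i Hi. destruct (Nat.le_gt_cases i N) as [h|h].
    + rewrite (proj2 (Nat.leb_le _ _) h). auto.
    + rewrite (proj2 (Nat.leb_gt _ _) h). auto.
  - intros i Hi. rewrite (proj2 (Nat.leb_le i N)) by lia.
    destruct (Nat.le_gt_cases (S i) N) as [h|h].
    + rewrite (proj2 (Nat.leb_le _ _) h). apply Hs; lia.
    + rewrite (proj2 (Nat.leb_gt _ _) h). assert (i = N) by lia. subst; auto.
Qed.

Lemma chain_lemma B p q : mconnected d B -> B p -> B q -> reach B p q.
Proof.
  intros HB Bp Bq. apply NNPP; intro Hq. apply HB.
  exists (fun y => exists z, reach B p z /\ d z y < 1),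
         (fun y => exists w, B w /\ ~ reach B p w /\ d w y < 1).
  repeat split.
  - intros y [z [Hz Hzy]]. exists (1 - d z y). split; [lra|].
    intros y' Hy'. exists z; split; auto. pose proof (dtri z y y'); lra.
  - intros y [z [Hz Hzy]]. exists (1 - d z y). split; [lra|].
    intros y' Hy'. exists z; repeat split; auto; try tauto. pose proof (dtri z y y'); lra.
  - intros y By. destruct (classic (reach B p y)).
    + left; exists y; rewrite dxx; split; auto; lra.
    + right; exists y; rewrite dxx; repeat split; auto; lra.
  - exists p; split; auto. exists p; split; [|rewrite dxx; lra].
    exists (fun _ => p), 0%nat; repeat split; auto. intros; lia.
  - exists q; split; auto. exists q; repeat split; auto. rewrite dxx; lra.
  - intros y By [z [Hz Hzy]] [w [Bw [Hw Hwy]]].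
    apply Hw. apply (reach_ext B p y w); auto.
    eapply reach_ext; eauto. rewrite dsym; auto.
Qed.

Lemma exists_nat_gt M : exists n : nat, M < INR n.
Proof.
  destruct (archimed (Rabs M)) as [H1 _].
  assert (0 <= up (Rabs M))%Z.
  { apply le_IZR. simpl. pose proof (Rabs_pos M); lra. }
  exists (Z.to_nat (up (Rabs M))). rewrite INR_IZR_INZ, Z2Nat.id by auto.
  pose proof (Rle_abs M); lra.
Qed.

End Aux.

Theorem proposition3p14 (X : Type) (d : X -> X -> R) (f : X -> R)
  (Hd : is_metric d) (Hgeo : geodesic d) :
  glacially_oscillating d f <->
  (forall eps, 0 < eps -> exists (K : X -> Prop), mbounded d K /\
     forall C : X -> Prop, @is_component X d (fun x : X => ~ K x) C ->
       diam_image_le f C eps).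
Proof.
  split.
  - intros Hgo eps Heps.
    destruct (Hgo eps Heps) as [K [n [[Kb Kcov] Hch]]].
    destruct (Kcov (K 0%nat) 1 (Kb 0%nat) Rlt_0_1) as [i0 [_ Hi0]].
    exists (K i0). split; [apply Kb|].
    intros C [x [Ax HC]] a b Ca Cb. apply HC in Ca. apply HC in Cb.
    destruct Ca as [Ba [Bcn [Bac [Bax Baa]]]], Cb as [Bb [Bcn' [Bbc [Bbx Bbb]]]].
    assert (Hc : mconnected d (fun y => Ba y \/ Bb y)) by (apply (conn_union d Ba Bb x); auto).
    destruct (chain_lemma d Hd _ a b Hc (or_introl Baa) (or_intror Bbb))
      as [xs [N [E0 [EN [HB Hs]]]]].
    subst. apply Rlt_le. apply Hch.
    intros i Hi. exists i0. repeat split.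
    + destruct (HB i) as [h|h]; [lia|apply Bac; auto|apply Bbc; auto].
    + destruct (HB (S i)) as [h|h]; [lia|apply Bac; auto|apply Bbc; auto].
    + specialize (Hs i Hi). lra.
  - intros H eps Heps.
    destruct (H (eps/2)) as [K [[x0 [rho Hrho]] HK]]; [lra|].
    exists (fun i y => d x0 y <= rho + INR i), (fun i => i).
    split; [split|].
    + intro i. exists x0, (rho + INR i); auto.
    + intros B r [y0 [r0 Hb]] Hr.
      destruct (exists_nat_gt (Rmax r (d x0 y0 + r0 - rho))) as [i Hi].
      exists i. split.
      * intros x Bx. pose proof (dtri d Hd x0 y0 x). pose proof (Hb x Bx).
        pose proof (Rmax_r r (d x0 y0 + r0 - rho)). lra.
      * pose proof (Rmax_l r (d x0 y0 + r0 - rho)). lra.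
    + intros x N Hch. destruct N as [|N].
      { unfold Rminus; rewrite Rplus_opp_r, Rabs_R0; lra. }
      set (A := fun y => ~ K y).
      assert (Kle : forall y m, K y -> d x0 y <= rho + INR m).
      { intros y m Ky. pose proof (pos_INR m). pose proof (Hrho y Ky). lra. }
      assert (A0 : A (x 0%nat)).
      { destruct (Hch 0%nat) as [m [h1 _]]; [lia|]. intro Ky. apply h1, Kle; auto. }
      assert (Hcomp : forall j, (j <= S N)%nat -> component d A (x 0%nat) (x j)).
      { induction j as [|j IH]; intro Hj.
        - exists (fun y => y = x 0%nat). repeat split; auto using conn_single.
          intros z ->; auto.
        - destruct (IH ltac:(lia)) as [B [Bc [BA [B0 Bj]]]].
          destruct (Hch j) as [m [h1 [h2 h3]]]; [lia|]. cbv beta in h1, h2.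
          destruct (Hgeo (x j) (x (S j))) as [g [g0 [gL giso]]].
          pose proof (dpos d Hd (x j) (x (S j))) as Lpos.
          set (Sg := fun y => exists t, 0 <= t <= d (x j) (x (S j)) /\ g t = y).
          assert (SgC : mconnected d Sg) by (apply seg_conn; auto).
          exists (fun y => B y \/ Sg y). repeat split.
          + apply conn_union with (x j); auto. exists 0; split; [lra|auto].
          + intros z [Bz | [t [Ht Ez]]]; auto. subst z. intro Kg. apply h1.
            pose proof (Hrho _ Kg). pose proof (dtri d Hd x0 (g t) (x j)).
            assert (d (g t) (x j) = t).
            { rewrite <- g0, giso by lra. rewrite Rminus_0_r, Rabs_pos_eq; lra. }
            lra.
          + left; auto.
          + right. exists (d (x j) (x (S j))); split; [lra|auto]. }
      assert (HC : is_component d (fun y => ~ K y) (component d A (x 0%nat))).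
      { exists (x 0%nat). split; auto. tauto. }
      pose proof (HK _ HC (x 0%nat) (x (S N)) (Hcomp 0%nat ltac:(lia)) (Hcomp (S N) ltac:(lia))).
      lra.
Qed.
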